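(* A metrizable space $X$ satisfies $S_{fin}(\mathcal{K}_{\Omega},\mathcal{K}_{\Omega})$ if and only if $vet(Q_p(X,\mathbb{D}))=\omega$.
   Context: A function $f:X\to Y$ is quasicontinuous if for every $x\in X$, every open $V\ni f(x)$ and every open $U\ni x$ there is a nonempty open $W\subseteq U$ with $f(W)\subseteq V$. $Q_p(X,\mathbb{D})$ is the space of quasicontinuous functions from $X$ to the discrete space $\mathbb{D}=\{0,1\}$ with the topology of pointwise convergence. $\mathcal{K}_\Omega$ is the set of families $\mathcal{U}$ of open subsets of $X$ with $X=\bigcup\{\overline{U}:U\in\mathcal{U}\}$, no element of $\mathcal{U}$ dense in $X$, and for each finite $F\subseteq X$ some $U\in\mathcal{U}$ with $F\subseteq\overline{U}$. $S_{fin}(\mathcal{A},\mathcal{B})$: for every sequence $(A_n)_{n\in\mathbb{N}}$ of elements of $\mathcal{A}$ there are finite $B_n\subseteq A_n$ with $\bigcup_n B_n\in\mathcal{B}$. $vet(Z)=\omega$ means: for every $z\in Z$ and every sequence $(A_n)_{n\in\omega}$ of subsets of $Z$ with $z\in\bigcap_n\overline{A_n}$ there are finite $K_n\subseteq A_n$ with $z\in\overline{\bigcup_n K_n}$. *)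

(* Defs.v *)
From HB Require Import structures.
From mathcomp Require Import all_boot all_order all_algebra.
From mathcomp Require Import all_classical all_reals all_analysis.
Set Implicit Arguments. Unset Strict Implicit. Unset Printing Implicit Defensive.
Import Order.TTheory GRing.Theory Num.Theory.
Local Open Scope classical_set_scope.

Definition quasicontinuous (X Y : topologicalType) (f : X -> Y) : Prop :=
  forall (x : X) (V : set Y) (U : set X), open V -> V (f x) -> open U -> U x ->
    exists W : set X, [/\ open W, W !=set0, W `<=` U & f @` W `<=` V].

(* the set of quasicontinuous functions X -> D = {0,1} (bool, discrete),
   as a subset of the space of all functions with the topology of
   pointwise convergence *)
Definition PtwsD (X : topologicalType) : topologicalType := {ptws X -> bool}.

Definition QC_set (X : topologicalType) : set (PtwsD X) :=
  [set f : PtwsD X | quasicontinuous (f : X -> bool)].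

Definition Qp (X : topologicalType) : topologicalType := set_type (@QC_set X).

Definition K_Omega (X : topologicalType) (UU : set (set X)) : Prop :=
  [/\ (forall U, UU U -> open U),
      \bigcup_(U in UU) closure U = [set: X],
      (forall U, UU U -> ~ dense U) &
      (forall F : set X, finite_set F -> exists2 U, UU U & F `<=` closure U)].

Definition S_fin (X : Type) (A B : set (set X) -> Prop) : Prop :=
  forall An : nat -> set (set X), (forall n, A (An n)) ->
    exists Bn : nat -> set (set X),
      (forall n, finite_set (Bn n) /\ Bn n `<=` An n) /\ B (\bigcup_n Bn n).

Definition vet_omega (Z : topologicalType) : Prop :=
  forall (z : Z) (A : nat -> set Z), (forall n, closure (A n) z) ->
    exists K : nat -> set Z,
      (forall n, finite_set (K n) /\ K n `<=` A n) /\ closure (\bigcup_n K n) z.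

(* Main.v *)
Require Import Defs.
From HB Require Import structures.
From mathcomp Require Import all_boot all_order all_algebra.
From mathcomp Require Import all_classical all_reals all_analysis.
From mathcomp Require Import lra.
Local Open Scope classical_set_scope.
Set Implicit Arguments. Unset Strict Implicit.

Definition agree {T : eqType} (s : seq T) (f g : T -> bool) := forall x, x \in s -> f x = g x.

Lemma ptws_nbhs_cyl (X : topologicalType) (f : PtwsD X) (U : set (PtwsD X)) :
  nbhs f U -> exists s : seq X, forall g : PtwsD X, agree s g f -> U g.
Proof.
move=> [] P [] [] Q QfinP <- [] V JV Vpz PU.
have [L Lsub VL] := QfinP _ JV.
move: Lsub VL Vpz; clear QfinP => Lsub VL Vf.
rewrite -VL in Vf.
suff [s hs] : exists s : seq X, forall g : PtwsD X, agree s g f -> 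
   forall M, M \in (finmap.enum_fset L) -> (isSubBaseTopological.b M : set (PtwsD X)) g.
  exists s => g /hs gM; apply: PU; exists V => //; rewrite -VL; simpl => M ML; exact: gM.
have : forall M, M \in (finmap.enum_fset L) -> (isSubBaseTopological.b M : set (PtwsD X)) f.
  by move=> M ML; exact: Vf.
have := (fun M (ML : M \in finmap.enum_fset L) => Lsub M ML).
clear Lsub.
elim: (finmap.enum_fset L) => [|M l IH] Lsub fl.
  by exists [::] => g _ M.
have [s hs] := IH (fun N NL => Lsub N (mem_behead (s:=M :: l) NL)) (fun N NL => fl N (mem_behead (s:=M :: l) NL)).
have := Lsub M (mem_head _ _); rewrite inE => -[i _ [N oN NM]].
exists (i :: s) => g ag N'; rewrite in_cons => /orP[/eqP ->|N'l]; last first.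
  by apply: hs => // x xs; apply: ag; rewrite in_cons xs orbT.
have := fl M (mem_head _ _).
rewrite /= -NM /= => fiN.
by rewrite (ag i (mem_head _ _)).
Qed.

Lemma ptws_cyl_nbhs (X : topologicalType) (f : PtwsD X) (s : seq X) :
  nbhs f [set g : PtwsD X | agree s g f].
Proof.
elim: s => [|x s IH].
  by apply: filterS filterT => g _ y.
have hx : nbhs f [set g : PtwsD X | g x = f x].
  have := @proj_continuous X (fun _ => bool) x f.
  move=> /(_ [set f x]); apply.
  by rewrite /= nbhs_principalE; apply/principal_filterP.
apply: filterS (filterI hx IH) => g [gx gs] y; rewrite in_cons => /orP[/eqP ->|ys] //.
exact: gs.
Qed.

Lemma qp_nbhs_cyl (X : topologicalType) (z : Qp X) (B : set (Qp X)) :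
  nbhs z B -> exists s : seq X, forall g : Qp X, agree s (val g) (val z) -> B g.
Proof.
rewrite nbhsE; move=> [W [oW Wz] WB].
case: oW => W0 oW0 eW.
have : nbhs (val z : PtwsD X) W0.
  apply: open_nbhs_nbhs; split => //; by rewrite -eW in Wz.
move=> /ptws_nbhs_cyl [s hs]; exists s => g ag; apply: WB; rewrite -eW; exact: hs.
Qed.

Lemma qp_cyl_nbhs (X : topologicalType) (z : Qp X) (s : seq X) :
  nbhs z [set g : Qp X | agree s (val g) (val z)].
Proof.
have := @initial_continuous _ _ (@set_val _ (@QC_set X)) z.
move=> /(_ _ (ptws_cyl_nbhs (val z : PtwsD X) s)); exact.
Qed.

Lemma qp_closureP (X : topologicalType) (A : set (Qp X)) (z : Qp X) :
  closure A z <-> forall s : seq X, exists2 g, A g & agree s (val g) (val z).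
Proof.
split.
- move=> cl s; have [g [Ag cg]] := cl _ (qp_cyl_nbhs z s); by exists g.
- move=> h B /qp_nbhs_cyl [s hs]; have [g Ag ag] := h s; exists g; split => //; exact: hs.
Qed.

Lemma qp_eq (X : topologicalType) (g z : Qp X) : (forall x, val g x = val z x) -> g = z.
Proof. by move=> h; apply/val_inj/funext. Qed.

Definition indc (X : topologicalType) (U : set X) : X -> bool :=
  fun x => `[< ~ closure U° x >].

Lemma indc_qc (X : topologicalType) (U : set X) : quasicontinuous (indc U).
Proof.
move=> x V U0 oV Vx oU0 U0x.
have [cx|ncx] := pselect (closure U° x).
- have := cx U0 (open_nbhs_nbhs (conj oU0 U0x)) => -[w [Uw U0w]].
  exists (U0 `&` U°); split.
  + exact: openI oU0 (@open_interior _ _).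
  + by exists w.
  + by move=> ? [].
  + move=> _ [y [_ Uy] <-]; move: Vx; rewrite /indc.
    have -> : `[< ~ closure U° x >] = false by apply/asboolP.
    by have -> : `[< ~ closure U° y >] = false by apply/asboolP => /(_ (subset_closure Uy)).
- exists (U0 `&` ~` closure U°); split.
  + exact: openI oU0 (closed_openC (@closed_closure _ _)).
  + by exists x.
  + by move=> ? [].
  + move=> _ [y [_ Uy] <-]; move: Vx; rewrite /indc.
    have -> : `[< ~ closure U° x >] = true by apply/asboolP.
    by have -> : `[< ~ closure U° y >] = true by apply/asboolP.
Qed.

Definition Gind (X : topologicalType) (U : set X) : Qp X :=
  @exist _ _ (indc U : PtwsD X) (mem_set (@indc_qc X U)).

Lemma qc_false (X : topologicalType) : quasicontinuous (fun _ : X => false).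
Proof.
move=> x V U0 oV Vx oU0 U0x; exists U0; split => //; first by exists x.
by move=> _ [y _ <-].
Qed.

Definition z0 (X : topologicalType) : Qp X :=
  @exist _ _ ((fun _ => false) : PtwsD X) (mem_set (@qc_false X)).

Lemma KO_cover (X : topologicalType) (UU : set (set X)) :
  (forall F : set X, finite_set F -> exists2 U, UU U & F `<=` closure U) ->
  \bigcup_(U in UU) closure U = [set: X].
Proof.
move=> h; apply/seteqP; split => // x _.
have [U UU1 xU] := h _ (finite_set1 x); exists U => //; exact: xU.
Qed.

Lemma vet_to_sfin (X : topologicalType) :
  vet_omega (Qp X) -> S_fin (@K_Omega X) (@K_Omega X).
Proof.
move=> hv U hU.
pose A n := (@Gind X) @` U n.
have clA n : closure (A n) (z0 X).
  apply/qp_closureP => s; have [h1 _ _ h4] := hU n.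
  have [V UV sV] := h4 [set` s] (finite_seq s).
  exists (Gind V); first by exists V.
  move=> x xs /=; rewrite /indc; apply/asboolP => /(_ _) -[].
  by move: (h1 _ UV) => /interior_id ->; exact: sV.
have [K [hK1 hK2]] := hv (z0 X) A clA.
have [pk hpk] : {pk : nat * Qp X -> set X & forall ng, A ng.1 ng.2 -> U ng.1 (pk ng) /\ Gind (pk ng) = ng.2}.
  apply: (@choice (nat * Qp X) (set X) (fun ng V => A ng.1 ng.2 -> U ng.1 V /\ Gind V = ng.2)) => -[n g] /=.
  have [[V UV <-]|nA] := pselect (A n g); last by exists set0.
  by exists V.
exists (fun n => (fun g => pk (n, g)) @` K n); split.
  move=> n; split; first exact/finite_image/(hK1 n).1.
  move=> _ [g Kg <-]; have := hpk (n, g) ((hK1 n).2 _ Kg); by case.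
have h4 : forall F : set X, finite_set F ->
    exists2 V, (\bigcup_n (fun g => pk (n, g)) @` K n) V & F `<=` closure V.
  move=> F /finite_seqP [s ->].
  have [g [n _ Kg] ag] := (qp_closureP _ _).1 hK2 s.
  have [Upk gpk] := hpk (n, g) ((hK1 n).2 _ Kg).
  exists (pk (n, g)); first by exists n => //; exists g.
  move=> x /= xs; have := ag x xs; rewrite /= in gpk; rewrite -{1}gpk /= /indc => /asboolP.
  move=> /contrapT; apply: closureS; exact: interior_subset.
split.
- move=> V [n _ [g Kg <-]]; have [Upk _] := hpk (n, g) ((hK1 n).2 _ Kg).
  by have [h1 _ _ _] := hU n; exact: h1.
- exact: KO_cover.
- move=> V [n _ [g Kg <-]]; have [Upk _] := hpk (n, g) ((hK1 n).2 _ Kg).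
  by have [_ _ h3 _] := hU n; exact: h3.
- exact: h4.
Qed.

Import Order.TTheory GRing.Theory Num.Theory.
Local Open Scope ring_scope.

Definition rk (R : realType) (k : nat) : R := k.+1%:R^-1.

Lemma rk_gt0 (R : realType) k : 0 < rk R k.
Proof. by rewrite /rk invr_gt0 ltr0Sn. Qed.

Lemma rk_le (R : realType) (k m : nat) : (k <= m)%N -> rk R m <= rk R k.
Proof. by move=> km; rewrite /rk lef_pV2 ?posrE ?ltr0Sn // ler_nat ltnS. Qed.

Lemma small_k (R : realType) (e : R) : 0 < e -> exists k, rk R k < e.
Proof.
move=> ep; case: (near_infty_natSinv_lt (PosNum ep)) => N _ hN.
by exists N; exact: hN N (leqnn N).
Qed.

Lemma sep_pts (R : realType) (X : pseudoMetricType R) (hX : hausdorff_space X) (x o : X) :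
  x <> o -> exists r : R, 0 < r /\ forall y, ball x r y -> ball o r y -> False.
Proof.
move=> xo; apply: contrapT => hn; apply: xo; apply: hX.
move=> A B /nbhs_ballP [e1 e1p b1] /nbhs_ballP [e2 e2p b2].
have mp : 0 < Num.min e1 e2 by rewrite lt_min e1p e2p.
apply: contrapT => hy; apply: hn; exists (Num.min e1 e2); split => // y bx bo.
apply: hy; exists y; split.
  by apply: b1; apply: le_ball bx; rewrite ge_min lexx.
by apply: b2; apply: le_ball bo; rewrite ge_min lexx orbT.
Qed.

Lemma sep_seq (R : realType) (X : pseudoMetricType R) (hX : hausdorff_space X) (o : X) (s : seq X) :
  o \notin s -> exists r : R, 0 < r /\ forall x, x \in s -> forall y, ball x r y -> ball o r y -> False.
Proof.
elim: s => [|a s IH] os.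
  by exists 1; split => // x.
rewrite in_cons negb_or in os; case/andP: os => oa os.
have [r [rp hr]] := IH os.
have [r' [r'p hr']] := sep_pts hX (nesym (elimN eqP oa) : a <> o).
have mp : 0 < Num.min r r' by rewrite lt_min rp r'p.
exists (Num.min r r'); split => // x; rewrite in_cons => /orP[/eqP ->|xs] y b1 b2.
  by apply: (hr' y); [apply: le_ball b1|apply: le_ball b2]; rewrite ge_min lexx orbT.
by apply: (hr x xs y); [apply: le_ball b1|apply: le_ball b2]; rewrite ge_min lexx.
Qed.

Lemma mins_le (R : realType) (r : nat -> R) (e : R) (K : nat) :
  0 < e -> (forall m, 0 < r m) ->
  exists d : R, [/\ 0 < d, d <= e & forall m, (m <= K)%N -> d <= r m].
Proof.
move=> ep rp; elim: K => [|K [d [dp de dr]]].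
  exists (Num.min e (r 0%N)); split; first by rewrite lt_min ep rp.
    by rewrite ge_min lexx.
  by move=> m; rewrite leqn0 => /eqP ->; rewrite ge_min lexx orbT.
exists (Num.min d (r K.+1)); split; first by rewrite lt_min dp rp.
  by rewrite ge_min de.
move=> m; rewrite leq_eqVlt => /orP[/eqP ->|mK]; first by rewrite ge_min lexx orbT.
by rewrite ge_min dr.
Qed.

Lemma approach (R : realType) (X : pseudoMetricType R) (hX : hausdorff_space X)
  (S : set X) (x : X) : open S -> closure S x ->
  exists V : set X, [/\ open V, closure V x & forall p, closure V p -> S p \/ p = x].
Proof.
move=> oS clS.
have hm : forall m : nat, exists yr : X * R, [/\ 0 < yr.2, yr.2 <= rk R m,
    ball x (rk R m) yr.1 & ball yr.1 (yr.2 + yr.2) `<=` S].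
  move=> m; have [y [Sy By]] := clS _ (nbhsx_ballx x _ (rk_gt0 R m)).
  have /nbhs_ballP [e ep be] : nbhs y S by apply: open_nbhs_nbhs.
  have e2p : 0 < e / 2 by rewrite divr_gt0.
  exists (y, Num.min (e / 2) (rk R m)); split => /=.
  - by rewrite lt_min e2p rk_gt0.
  - by rewrite ge_min lexx orbT.
  - by [].
  - move=> w bw; apply: be; apply: le_ball bw.
    have h1 : Num.min (e / 2) (rk R m) <= e / 2 by rewrite ge_min lexx.
    by apply: le_trans (lerD h1 h1) _; rewrite -splitr.
have [yr hyr] := choice hm.
exists (\bigcup_m (ball (yr m).1 (yr m).2)°); split.
- by apply: bigcup_open => m _; exact: open_interior.
- move=> B /nbhs_ballP [e ep be].
  have [k hk] := small_k ep.
  have [h1 h2 h3 h4] := hyr k.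
  exists (yr k).1; split.
    by exists k => //; exact: nbhsx_ballx.
  by apply: be; apply: le_ball h3; exact: ltW.
- move=> p clp; have [Sp|nSp] := pselect (S p); first by left.
  right; apply: hX => A B /nbhs_ballP [e ep be] nB.
  have e3p : 0 < e / 3 by rewrite divr_gt0.
  have [k hk] := small_k e3p.
  have rpos : forall m, 0 < (yr m).2 by move=> m; case: (hyr m).
  have [d [dp de dr]] := mins_le k e3p rpos.
  have [q [[m _ qm] pq]] := clp _ (nbhsx_ballx p _ dp).
  have bq : ball (yr m).1 (yr m).2 q by exact: interior_subset qm.
  have [h1 h2 h3 h4] := hyr m.
  have [mk|km] := leqP m k.
    exfalso; apply: nSp; apply: h4.
    apply: ball_triangle bq _; apply: ball_sym; apply: le_ball pq; exact: dr.
  exists x; split; last exact: nbhs_singleton.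
  apply: be.
  have b1 : ball p (d + (yr m).2) (yr m).1 by apply: ball_triangle pq (ball_sym bq).
  have b2 := ball_triangle b1 (ball_sym h3).
  apply: le_ball b2.
  have rkm : rk R m <= rk R k by apply: rk_le; exact: ltnW.
  have : d + (yr m).2 + rk R m <= e / 3 + rk R k + rk R k.
    by apply: lerD; [apply: lerD => //; apply: le_trans h2 rkm|].
  move=> /le_trans; apply.
  have : e / 3 + rk R k + rk R k <= e / 3 + e / 3 + e / 3.
    by apply: lerD; [apply: lerD|]; rewrite ?lexx // ltW.
  move=> /le_trans; apply.
  lra.
Qed.

Lemma open_bool (A : set bool) : open A.
Proof. by rewrite openE => b Ab; rewrite /interior /= nbhs_principalE; apply/principal_filterP. Qed.

Lemma closure_bigcup_seq (I : eqType) (T : topologicalType) (s : seq I) (V : I -> set T) :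
  closure (\bigcup_(i in [set` s]) V i) `<=` \bigcup_(i in [set` s]) closure (V i).
Proof.
elim: s => [|a s IH].
  have -> : \bigcup_(i in [set` [::]]) V i = set0.
    by apply/seteqP; split => // y [i].
  by rewrite closure0.
have -> : \bigcup_(i in [set` a :: s]) V i = V a `|` \bigcup_(i in [set` s]) V i.
  apply/seteqP; split => y.
    by move=> [i /=]; rewrite in_cons => /orP[/eqP ->|iS] Vy; [left|right; exists i].
  case=> [Vy|[i /= iS Vy]]; first by exists a => //=; rewrite mem_head.
  by exists i => //=; rewrite in_cons iS orbT.
rewrite closureU => y [cy|/IH [i /= iS cy]].
  by exists a => //=; rewrite mem_head.
by exists i => //=; rewrite in_cons iS orbT.
Qed.

Lemma closure_capo (T : topologicalType) (S U : set T) (x : T) :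
  closure S x -> open U -> U x -> closure (S `&` U) x.
Proof.
move=> cS oU Ux B nB.
have nUB : nbhs x (U `&` B) by apply: filterI => //; exact: open_nbhs_nbhs.
have [w [Sw [Uw Bw]]] := cS _ nUB; by exists w.
Qed.

Lemma sfin_to_vet (R : realType) (X : pseudoMetricType R) (hX : hausdorff_space X) :
  S_fin (@K_Omega X) (@K_Omega X) -> vet_omega (Qp X).
Proof.
move=> hS z A hA.
have [[n Anz]|hnA] := pselect (exists n, A n z).
  exists (fun m => if m == n then [set z] else set0); split.
    move=> m; case: (m =P n) => [->|_]; split.
    - exact: finite_set1.
    - by move=> _ ->.
    - exact: finite_set0.
    - by [].
  by apply: subset_closure; exists n => //; rewrite eqxx.
have nA : forall n, ~ A n z by move=> n Anz; apply: hnA; exists n.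
pose f : X -> bool := val z.
have qf : quasicontinuous f by exact: (set_valP z).
pose Wb (b : bool) := [set x | f x = b]°.
pose Wt := Wb false `|` Wb true.
pose Zk k := [set x | ~ Wt x \/ forall b, ~ Wt b -> ~ ball b (rk R k) x].
pose Pk k (V : set X) (g : Qp X) := forall x, closure V x -> Zk k x -> val g x = f x.
pose Fam k n := [set V : set X | [/\ open V, ~ dense V & exists2 g, A (n + k)%N g & Pk k V g]].
have oWt : open Wt by apply: openU; exact: open_interior.
have Wt_meets : forall N, open N -> N !=set0 -> N `&` Wt !=set0.
  move=> N oN [y Ny].
  have [W [oW [w Ww] WN fW]] := qf y [set f y] N (@open_bool _) erefl oN Ny.
  exists w; split; first exact: WN.
  have : Wb (f y) w.
    rewrite /Wb /interior /=; apply: filterS (open_nbhs_nbhs (conj oW Ww)).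
    by move=> u Wu; apply: fW; exists u.
  by case: (f y) => ?; [right|left].
have WbE : forall b x, Wb b x -> f x = b by move=> b x /interior_subset.
have Zmono : forall k k' x, (k <= k')%N -> Zk k x -> Zk k' x.
  move=> k k' x kk' [?|h]; [by left|right] => b nWb bb; apply: (h b nWb).
  by apply: le_ball bb; exact: rk_le.
have exk : forall s : seq X, exists k, forall x, x \in s -> Zk k x.
  elim=> [|a s [k hk]]; first by exists 0%N.
  have [ka hka] : exists ka, Zk ka a.
    have [wa|nwa] := pselect (Wt a); last by exists 0%N; left.
    have /nbhs_ballP [e ep be] : nbhs a Wt by apply: open_nbhs_nbhs.
    have [ka hka] := small_k ep.
    exists ka; right => b nWb bb; apply: nWb; apply: be.
    by apply: le_ball (ball_sym bb); exact: ltW.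
  exists (maxn k ka) => x; rewrite in_cons => /orP[/eqP ->|xs].
    by apply: Zmono hka; exact: leq_maxr.
  by apply: Zmono (hk x xs); exact: leq_maxl.
have h4 : forall k n (F : set X), finite_set F -> exists2 V, Fam k n V & F `<=` closure V.
  move=> k n F /finite_seqP [s ->].
  have [g Ag ag] := (qp_closureP _ _).1 (hA (n + k)%N) s.
  have [q0 os] : exists q0, q0 \notin s.
    apply: contrapT => hno; apply: (nA (n + k)%N).
    suff <- : g = z by [].
    apply: qp_eq => x; apply: ag; apply: contrapT => xs; apply: hno; exists x.
    by apply/negP.
  have [rho [rhop hrho]] := sep_seq hX os.
  have hV : forall x, exists V : set X, x \in s -> [/\ open V, closure V x,
      V `<=` ball x rho & forall y, closure V y -> Zk k y -> val g y = f y].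
    move=> x; have [xs|xns] := boolP (x \in s); last by exists set0.
    have agx : val g x = f x := ag x xs.
    have [S [oS clS gS]] : exists S, [/\ open S, closure S x &
        forall y, S y -> Zk k y -> val g y = f y].
      have [wx|nwx] := pselect (Wt x).
      - have xWb : Wb (f x) x.
          by case: wx => hb; have := WbE _ _ hb => ->.
        exists (Wb (f x) `&` [set y | val g y = f x]°); split.
        + by apply: openI; exact: open_interior.
        + move=> B nB.
          have qg : quasicontinuous (val g : X -> bool) by exact: (set_valP g).
          have oU : open (B° `&` Wb (f x)) by apply: openI; exact: open_interior.
          have [W [oW [w Ww] WU fW]] := qg x [set f x] _ (@open_bool _) agx oU (conj nB xWb).
          exists w; split; last by apply: interior_subset; exact: (WU w Ww).1.
          split; first exact: (WU w Ww).2.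
          rewrite /interior /=; apply: filterS (open_nbhs_nbhs (conj oW Ww)).
          by move=> u Wu; apply: fW; exists u.
        + move=> y [/WbE fy /interior_subset gy] _; by rewrite gy fy.
      - exists ((ball x (rk R k))° `&` Wt); split.
        + by apply: openI => //; exact: open_interior.
        + move=> B nB.
          have oBb : open (B° `&` (ball x (rk R k))°) by apply: openI; exact: open_interior.
          have [w [[Bw bw] Ww]] := Wt_meets _ oBb (ex_intro _ x (conj nB (nbhsx_ballx x _ (rk_gt0 R k)))).
          by exists w; split; [split|exact: interior_subset].
        + move=> y [bby Wy] [//|hy]; exfalso; apply: (hy x nwx).
          exact: interior_subset bby.
    have oS' : open (S `&` (ball x rho)°) by apply: openI => //; exact: open_interior.
    have clS' : closure (S `&` (ball x rho)°) x.
      apply: closure_capo => //; first exact: open_interior.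
      exact: nbhsx_ballx rhop.
    have [V [oV clV hV]] := approach hX oS' clS'.
    exists V => _; split => //.
      move=> y /subset_closure /hV [[_ /interior_subset] //|->].
      exact: ballxx.
    move=> y /hV [[Sy _] Zy|->]; [exact: gS|by move=> _].
  have [Vf hVf] := choice hV.
  exists (\bigcup_(x in [set` s]) Vf x).
    split.
    - by apply: bigcup_open => x xs; have [] := hVf x xs.
    - move=> dV.
      have [y [boy [x xs Vy]]] := dV _ (ex_intro _ q0 (nbhsx_ballx q0 _ rhop)) (@open_interior _ _).
      have [_ _ sub _] := hVf x xs.
      exact: (hrho x xs y (sub _ Vy) (interior_subset boy)).
    - exists g => // y /closure_bigcup_seq [x xs cy] Zy.
      by have [_ _ _ ] := hVf x xs; apply.
  move=> x xs; have [_ clx _ _] := hVf x xs.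
  by apply: closureS clx; exact: bigcup_sup.
have hFam : forall k n, K_Omega (Fam k n).
  move=> k n; split.
  - by move=> V [].
  - by apply: KO_cover; exact: h4.
  - by move=> V [].
  - exact: h4.
have [Bs hBs] := choice (fun k => hS (Fam k) (hFam k)).
have [wit hwit] : {wit : nat * nat * set X -> Qp X & forall knV, Fam knV.1.1 knV.1.2 knV.2 ->
    A (knV.1.2 + knV.1.1)%N (wit knV) /\ Pk knV.1.1 knV.2 (wit knV)}.
  apply: (@choice (nat * nat * set X) (Qp X) (fun knV g => Fam knV.1.1 knV.1.2 knV.2 ->
    A (knV.1.2 + knV.1.1)%N g /\ Pk knV.1.1 knV.2 g)) => -[[k n] V] /=.
  have [[_ _ [g Ag Pg]]|nF] := pselect (Fam k n V); last by exists z.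
  by exists g.
exists (fun m => \bigcup_(k in [set` iota 0 m.+1]) (fun V => wit (k, (m - k)%N, V)) @` Bs k (m - k)%N).
split.
  move=> m; split.
    apply: bigcup_finite => // k _; apply: finite_image.
    by have [h _] := hBs k; exact: (h _).1.
  move=> _ [k km [V BV <-]].
  have [h _] := hBs k; have FV := (h _).2 _ BV.
  have [Aw _] := hwit (k, (m - k)%N, V) FV; move: Aw => /=.
  have km2 : (k <= m)%N by move: km; rewrite /= -[X in _ \in X]/(iota 0 m.+1) mem_iota add0n ltnS.
  by rewrite subnK.
apply/qp_closureP => s.
have [k hk] := exk s.
have [_ [_ _ _ h4']] := hBs k.
have [V [n _ BV] sV] := h4' [set` s] (finite_seq s).
have [h _] := hBs k; have FV := (h _).2 _ BV.
have [Aw Pw] := hwit (k, n, V) FV.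
exists (wit (k, n, V)).
  exists (n + k)%N => //.
  exists k; first by rewrite /= -[X in _ \in X]/(iota 0 (n + k).+1) mem_iota add0n ltnS leq_addl.
  by exists V => //; rewrite addnK.
move=> x xs; apply: Pw; [exact: sV | exact: hk].
Qed.

Unset Implicit Arguments.
Local Close Scope ring_scope.

(* A metrizable space is represented as a metric space: a pseudometric
   space (over a realType R) whose topology is Hausdorff. *)
Theorem corollary4p4 (R : realType) (X : pseudoMetricType R)
    (hX : hausdorff_space X) :
  S_fin (@K_Omega X) (@K_Omega X) <-> vet_omega (Qp X).
Proof.
split; [exact: sfin_to_vet | exact: vet_to_sfin].
Qed.
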